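(* For every pair of nonnegative integers $(p,q)$ with $p\leq q$ there exists a positive integer $n$ with $\nu(n)=p$ and $e(n)=q$. Equivalently, the map $\Phi:\mathbb{N}_{+}\to\{(a,b)\in\mathbb{N}\times\mathbb{N}:\;a\leq b\}$, $\Phi(n)=(d(n),e(n))$, is well defined and surjective.
   Context: The Stern polynomials $B_n(t)\in\mathbb{Z}[t]$ are defined by $B_0(t)=0$, $B_1(t)=1$, and for $n\geq 1$: $B_{2n}(t)=tB_n(t)$, $B_{2n+1}(t)=B_n(t)+B_{n+1}(t)$. For $n\geq 1$ let $e(n)=\deg B_n(t)$, $d(n)=\operatorname{ord}_{t=0}B_n(t)$ (the largest $k$ with $t^k\mid B_n(t)$), and $\nu(n)=\max\{k:\;2^k\mid n\}$. *)

(* Defs.v *)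
From HB Require Import structures.
From mathcomp Require Import all_boot all_order all_algebra.
Set Implicit Arguments. Unset Strict Implicit. Unset Printing Implicit Defensive.
Import GRing.Theory.
Local Open Scope ring_scope.

(* Fuel-based evaluation of the Stern polynomial recursion;
   fuel k >= n suffices (arguments strictly decrease for n >= 2). *)
Fixpoint sternF (k n : nat) : {poly int} :=
  match k with
  | 0%N => 0
  | k'.+1 =>
      if n == 0%N then 0
      else if n == 1%N then 1
      else if odd n then sternF k' n./2 + sternF k' (n./2).+1
      else 'X * sternF k' n./2
  end.

Definition stern (n : nat) : {poly int} := sternF n n.

Definition e_deg (n : nat) : nat := (size (stern n)).-1.

Definition nu (n : nat) : nat := logn 2 n.

Definition ord0_is (P : {poly int}) (k : nat) : Prop :=
  dvdp 'X^k P /\ ~~ dvdp 'X^(k.+1) P.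

(* Main.v *)
Require Import Defs.
From HB Require Import structures.
From mathcomp Require Import all_boot all_order all_algebra.
From mathcomp Require Import zify.
Import GRing.Theory.
Local Open Scope ring_scope.

Lemma sternF_fuel k k' n : (n <= k)%N -> (n <= k')%N -> sternF k n = sternF k' n.
Proof.
elim: k k' n => [|k IH] [|k'] n /=; try (move=> h1 h2; have -> : n = 0%N by lia); try done.
move=> h1 h2.
case: ifP => // /eqP n0; case: ifP => // /eqP n1.
have hd := odd_double_half n. rewrite -addnn in hd.
case: ifP => ho.
- rewrite ho /= in hd.
  by congr (_ + _); apply: IH; lia.
- rewrite ho /= in hd.
  by congr (_ * _); apply: IH; lia.
Qed.

Lemma stern_fuel k n : (n <= k)%N -> sternF k n = stern n.
Proof. by move=> h; rewrite /stern (@sternF_fuel k n n h). Qed.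

Lemma stern0 : stern 0 = 0. Proof. by []. Qed.
Lemma stern1 : stern 1 = 1. Proof. by []. Qed.

Lemma sternF_S k n : sternF k.+1 n = if n == 0%N then 0 else if n == 1%N then 1
  else if odd n then sternF k n./2 + sternF k (n./2).+1 else 'X * sternF k n./2.
Proof. by []. Qed.

Lemma stern_unfold n : (2 <= n)%N -> stern n =
  if odd n then stern n./2 + stern (n./2).+1 else 'X * stern n./2.
Proof.
case: n => [//|m] h.
have hd := odd_double_half m.+1. rewrite -addnn in hd.
rewrite {1}/stern sternF_S.
have -> : (m.+1 == 0%N) = false by [].
have -> : (m.+1 == 1%N) = false by apply/eqP; lia.
case: ifP => ho; rewrite ho /= in hd; rewrite ?stern_fuel //; lia.
Qed.

Lemma half_dS n : (n.*2.+1)./2 = n.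
Proof. by rewrite /= uphalf_double. Qed.

Lemma stern_even n : stern (n.*2) = 'X * stern n.
Proof.
case: n => [|n]; first by rewrite /stern /= mulr0.
rewrite stern_unfold ?odd_double ?doubleK //; rewrite doubleS; lia.
Qed.

Lemma stern_odd n : (0 < n)%N -> stern (n.*2.+1) = stern n + stern n.+1.
Proof.
move=> h; rewrite stern_unfold; last by rewrite -addnn; lia.
by rewrite half_dS /= odd_double.
Qed.

Lemma stern_eval0 n : (stern n).[0] = (odd n)%:R.
Proof.
elim: n {-2}n (leqnn n) => [|N IH] n hn.
  by move: hn; rewrite leqn0 => /eqP ->; rewrite /stern horner0.
case: n hn => [|[|n]] hn; first by rewrite /stern horner0.
  by rewrite stern1 hornerC.
have hd := odd_double_half n.+2. rewrite -addnn in hd.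
rewrite stern_unfold //.
case: ifP => ho; rewrite ho /= in hd.
- rewrite hornerD !IH; try lia.
- by rewrite hornerM hornerX mul0r.
Qed.

Lemma stern_2pow p m : stern (2^p * m) = 'X^p * stern m.
Proof.
elim: p => [|p IH]; first by rewrite expn0 mul1n expr0 mul1r.
by rewrite expnS -mulnA mul2n stern_even IH exprS mulrA.
Qed.

Lemma decomp n : (0 < n)%N -> exists p m, odd m /\ n = (2^p * m)%N.
Proof.
elim: n {-2}n (leqnn n) => [|N IH] n hn h0; first lia.
have hd := odd_double_half n.
case ho: (odd n); first by exists 0%N, n; rewrite expn0 mul1n.
rewrite ho /= add0n in hd.
have [||p [m [om e]]] := IH n./2; try (rewrite -addnn in hd; lia).
exists p.+1, m; split => //.
by rewrite expnS -mulnA mul2n -e hd.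
Qed.

Lemma ord0X p P : P.[0] != 0 -> ord0_is ('X^p * P) p.
Proof.
move=> h; split; first by apply: dvdp_mulr; apply: dvdpp.
rewrite exprSr -[X in dvdp _ (X * _)]mulr1 -mulrA dvdp_mul2l; last first.
  by rewrite expf_neq0 // polyX_eq0.
rewrite mul1r -[X in dvdp X _]subr0 -polyC0 dvdp_XsubCl /root.
exact: h.
Qed.

Lemma stern_ones_rec k : (0 < k)%N ->
  stern (2^k.+1 - 1) = stern (2^k - 1) + 'X^k.
Proof.
move=> hk.
have h2 : (2 <= 2^k)%N by rewrite -{1}(expn1 2) leq_pexp2l.
have -> : (2^k.+1 - 1 = (2^k - 1).*2.+1)%N by rewrite expnS -addnn; lia.
rewrite stern_odd; last lia.
have -> : (2^k - 1).+1 = (2^k * 1)%N by lia.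
by rewrite stern_2pow stern1 mulr1.
Qed.

Lemma stern_ones_size k : (0 < k)%N -> size (stern (2^k - 1)) = k.
Proof.
elim: k => [//|k IH] _.
case: k IH => [|k] IH; first by rewrite expn1 stern1 size_poly1.
rewrite stern_ones_rec // addrC size_polyDl ?size_polyXn ?IH //.
Qed.

Lemma stern_ones_eval k : (0 < k)%N -> (stern (2^k - 1)).[0] = 1.
Proof.
move=> hk; rewrite stern_eval0.
have h2 : (2 <= 2^k)%N by rewrite -{1}(expn1 2) leq_pexp2l.
have -> : odd (2^k - 1) by rewrite oddB ?expn_gt0 // oddX /= eqn0Ngt hk.
by [].
Qed.

Lemma nz_of_eval (P : {poly int}) : P.[0] = 1 -> P != 0.
Proof. by move=> h; apply/eqP => e; rewrite e horner0 in h. Qed.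

Theorem mainTheorem2 :
  (forall p q : nat, (p <= q)%N ->
     exists n : nat, (0 < n)%N /\ nu n = p /\ e_deg n = q) /\
  (forall n : nat, (0 < n)%N ->
     (exists k : nat, ord0_is (stern n) k) /\
     (forall k : nat, ord0_is (stern n) k -> (k <= e_deg n)%N)) /\
  (forall p q : nat, (p <= q)%N ->
     exists n : nat, (0 < n)%N /\ ord0_is (stern n) p /\ e_deg n = q).
Proof.
have key : forall p q : nat, (p <= q)%N -> let n := (2^p * (2^(q-p).+1 - 1))%N in
  [/\ (0 < n)%N, nu n = p, e_deg n = q & ord0_is (stern n) p].
  move=> p q hpq n.
  have hk : (0 < (q - p).+1)%N by [].
  have h2 : (2 <= 2^(q-p).+1)%N by rewrite -{1}(expn1 2) leq_pexp2l.
  have hS := @stern_ones_eval _ hk.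
  have hz := @nz_of_eval _ hS.
  split.
  - by rewrite /n muln_gt0 expn_gt0 /=; lia.
  - rewrite /nu /n mulnC logn_Gauss ?pfactorK // coprime2n.
    by rewrite oddB ?expn_gt0 // oddX.
  - rewrite /e_deg /n stern_2pow size_mul ?stern_ones_size ?size_polyXn //.
      lia.
    by rewrite expf_neq0 // polyX_eq0.
  - by rewrite /n stern_2pow; apply: ord0X; rewrite hS.
split; first by move=> p q /key [? ? ? ?]; eexists; split; eauto.
split; last by move=> p q /key [? ? ? ?]; eexists; split; eauto.
move=> n /decomp [p [m [om ->]]].
have hS : (stern m).[0] = 1 by rewrite stern_eval0 om.
have hz : stern (2^p * m) != 0.
  rewrite stern_2pow mulf_neq0 //; last exact: nz_of_eval.
  by rewrite expf_neq0 // polyX_eq0.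
split; first by exists p; rewrite stern_2pow; apply: ord0X; rewrite hS.
move=> k [hd _]; have := dvdp_leq hz hd; rewrite size_polyXn /e_deg => h; by rewrite -ltnS (ltn_predK h).
Qed.
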